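(* Let $X,Y,Z$ be random variables on finite alphabets $\mathcal{X},\mathcal{Y},\mathcal{Z}$. For each $y\in\mathcal{Y}$ with $\Pr(Y=y)>0$, let $(A_y,B_y,C_y)$ be the random triple on $\mathcal{X}\times\mathcal{Y}\times\mathcal{Z}$ with $$\Pr(A_y=x,B_y=y',C_y=z)=\begin{cases}0 & \text{if } \Pr(Z=z)=0,\\ \dfrac{\Pr(X=x,Y=y',Z=z)\,\Pr(Z=z\mid Y=y)}{\Pr(Z=z)} & \text{otherwise.}\end{cases}$$ Let $A_{Z|Y}$ be the random variable on $\mathcal{X}$ with $\Pr(A_{Z|Y}=x)=\sum_{y:\Pr(Y=y)>0}\Pr(Y=y)\Pr(A_y=x)$. Then $H(A_{Z|Y})=H(X)$.
   Context: $H$ denotes Shannon entropy. *)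

(* Defs.v *)
From mathcomp Require Import all_boot all_order all_algebra.
From mathcomp Require Import reals exp.
Set Implicit Arguments. Unset Strict Implicit. Unset Printing Implicit Defensive.
Import Order.TTheory GRing.Theory Num.Theory.
Local Open Scope ring_scope.

Section Defs.
Variable R : realType.

Definition is_pmf (T : finType) (p : T -> R) : Prop :=
  (forall t, 0 <= p t) /\ \sum_(t : T) p t = 1.

Definition entropy (T : finType) (p : T -> R) : R :=
  - \sum_(t : T | 0 < p t) p t * (ln (p t) / ln 2).

Variables (X Y Z : finType).
(* joint law of (X,Y,Z): P x y z = Pr(X=x, Y=y, Z=z) *)
Variable P : X * Y * Z -> R.

Definition PrX (x : X) : R := \sum_(y : Y) \sum_(z : Z) P (x, y, z).
Definition PrY (y : Y) : R := \sum_(x : X) \sum_(z : Z) P (x, y, z).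
Definition PrZ (z : Z) : R := \sum_(x : X) \sum_(y : Y) P (x, y, z).
Definition PrYZ (y : Y) (z : Z) : R := \sum_(x : X) P (x, y, z).
(* Pr(Z=z | Y=y), used only when Pr(Y=y) > 0 *)
Definition condZY (z : Z) (y : Y) : R := PrYZ y z / PrY y.

Definition lawABC (y : Y) (t : X * Y * Z) : R :=
  let: (x, y', z) := t in
  if PrZ z == 0 then 0 else P (x, y', z) * condZY z y / PrZ z.

Definition lawA (y : Y) (x : X) : R :=
  \sum_(y' : Y) \sum_(z : Z) lawABC y (x, y', z).

Definition lawAZY (x : X) : R :=
  \sum_(y : Y | 0 < PrY y) PrY y * lawA y x.

End Defs.

(* Main.v *)
Require Import Defs.
From mathcomp Require Import all_boot all_order all_algebra.
From mathcomp Require Import reals exp.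
From mathcomp Require Import ring.
Import Order.TTheory GRing.Theory Num.Theory.
Local Open Scope ring_scope.

Lemma sum2_eq0 (R : realType) (A B : finType) (f : A -> B -> R) :
  (forall a b, 0 <= f a b) -> \sum_a \sum_b f a b = 0 -> forall a b, f a b = 0.
Proof.
move=> h0 hs a b.
have h1 : \sum_b f a b = 0.
  move/psumr_eq0P: hs; apply => // ? _; apply: sumr_ge0 => ? _; exact: h0.
move/psumr_eq0P: h1; apply => // ? _; exact: h0.
Qed.

Lemma lawAZY_eq (R : realType) (X Y Z : finType) (P : X * Y * Z -> R)
  (hP : is_pmf P) x : lawAZY P x = PrX P x.
Proof.
case: hP => h0 _.
have hZ : forall z, PrZ P z = 0 -> forall x y, P (x, y, z) = 0.
  by move=> z hz; apply: sum2_eq0 => // ? ?; apply: h0.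
have hY : forall y, PrY P y = 0 -> forall x z, P (x, y, z) = 0.
  by move=> y hy; apply: sum2_eq0 => // ? ?; apply: h0.
pose f y := \sum_(y' : Y) \sum_(z : Z)
  (if PrZ P z == 0 then 0 else P (x, y', z) * PrYZ P y z / PrZ P z).
have -> : lawAZY P x = \sum_y f y.
  rewrite /lawAZY big_mkcond /=; apply: eq_bigr => y _.
  case: ifP => hy.
    rewrite /lawA mulr_sumr; apply: eq_bigr => y' _.
    rewrite mulr_sumr; apply: eq_bigr => z _ /=.
    case: ifP => hz0; first by rewrite mulr0.
    rewrite /condZY; field.
    by rewrite hz0 gt_eqF.
  have hy0 : PrY P y = 0.
    apply/eqP; rewrite eq_le; rewrite lt_neqAle in hy.
    have ge : 0 <= PrY P y by apply: sumr_ge0 => ? _; apply: sumr_ge0 => ? _; apply: h0.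
    by rewrite ge andbT; move: hy; rewrite ge andbT eq_sym => /negbFE /eqP ->.
  apply/esym; apply: big1 => y' _; apply: big1 => z _.
  case: ifP => // _.
  by rewrite /PrYZ big1 ?mulr0 ?mul0r // => x' _; apply: hY.
rewrite /f exchange_big /PrX; apply: eq_bigr => y' _.
rewrite exchange_big; apply: eq_bigr => z _ /=.
have [hz|hz] := eqVneq (PrZ P z) 0.
  by rewrite ?hz ?eqxx big1 // hZ.
rewrite ?(negbTE hz) -mulr_suml -mulr_sumr.
have -> : \sum_y PrYZ P y z = PrZ P z by rewrite /PrYZ /PrZ exchange_big.
by rewrite -mulrA divff // mulr1.
Qed.

Theorem lemma2 (R : realType) (X Y Z : finType) (P : X * Y * Z -> R)
  (hP : is_pmf P) :
  entropy (lawAZY P) = entropy (PrX P).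
Proof.
rewrite /entropy; congr (- _).
by apply: eq_big => [t|t _]; rewrite lawAZY_eq.
Qed.
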